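(* Let $(S,\mu)$ be a complete, $\sigma$-finite positive measure space and let $X$ be a Banach space whose norm is Fréchet differentiable. Then every non-zero left symmetric point (with respect to Birkhoff–James orthogonality) of $L^1(\mu,X)$ is a smooth point of $L^1(\mu,X)$.
   Context: $L^1(\mu,X)$ is the Lebesgue–Bochner space of (classes of a.e. equal) strongly measurable $f:S\to X$ with $\|f\|=\int_S\|f(s)\|\,d\mu(s)<\infty$. In a normed space $Y$ over $\mathbb{K}$, $x\perp_{BJ}y$ means $\|x+\lambda y\|\ge\|x\|$ for all $\lambda\in\mathbb{K}$; $x$ is a left symmetric point if $x\perp_{BJ}y$ implies $y\perp_{BJ}x$ for all $y\in Y$. A non-zero $x$ is smooth if there is a unique norm-one $F\in Y^*$ with $F(x)=\|x\|$. The norm of $X$ is Fréchet differentiable if for every non-zero $x$ there is $\varphi\in X^*$ with $\lim_{h\to0}\big|\|x+h\|-\|x\|-\varphi(h)\big|/\|h\|=0$. *)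

(* Defs.v *)
From HB Require Import structures.
From mathcomp Require Import all_boot all_order all_algebra.
From mathcomp Require Import all_classical all_reals all_analysis.
From mathcomp Require Import complex.

Set Implicit Arguments.
Unset Strict Implicit.
Unset Printing Implicit Defensive.

Import Order.TTheory GRing.Theory Num.Theory.
Import numFieldNormedType.Exports.

Local Open Scope classical_set_scope.
Local Open Scope ring_scope.

(* Scalars K are either the reals R (toR = id, ofR = id) or the complex
   numbers R[i] (toR = Re, ofR = (_)%:C).  The norm of a K-normed space takes
   values in K; [toR] converts these (real) values into R, and [ofR] embeds
   R into K. *)
Section BochnerL1.
Context (R : realType) (K : numFieldType) (toR : K -> R) (ofR : R -> K).
Context (X : normedModType K).

Definition rnorm (x : X) : R := toR `|x|.

Definition frechet_diff_norm : Prop :=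
  forall x : X, x != 0 ->
  exists phi : X -> R,
    [/\ (forall h k : X, phi (h + k) = phi h + phi k),
        (forall (r : R) (h : X), phi (ofR r *: h) = r * phi h),
        (exists C : R, forall h, `|phi h| <= C * rnorm h) &
        (forall e : R, 0 < e -> exists2 del : R, 0 < del &
           forall h : X, 0 < rnorm h < del ->
             `|rnorm (x + h) - rnorm x - phi h| <= e * rnorm h)].

Context (d : measure_display) (S : measurableType d)
        (mu : {measure set S -> \bar R}).

Definition simple_measurable (g : S -> X) : Prop :=
  finite_set (range g) /\ forall x : X, measurable (g @^-1` [set x]).

Definition strongly_measurable (f : S -> X) : Prop :=
  exists g : nat -> S -> X, (forall n, simple_measurable (g n)) /\
    {ae mu, forall s, (fun n => g n s) @ \oo --> f s}.

Definition L1enorm (f : S -> X) : \bar R := (\int[mu]_s (rnorm (f s))%:E)%E.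

(* representatives of elements of L^1(mu, X) *)
Definition inL1 (f : S -> X) : Prop :=
  strongly_measurable f /\ (L1enorm f < +oo)%E.

(* the L^1 norm (meaningful on inL1 functions) *)
Definition L1norm (f : S -> X) : R := fine (L1enorm f).

Definition L1add (f g : S -> X) : S -> X := fun s => f s + g s.
Definition L1scale (l : K) (f : S -> X) : S -> X := fun s => l *: f s.

Definition BJ_L1 (f g : S -> X) : Prop :=
  forall l : K, L1norm f <= L1norm (L1add f (L1scale l g)).

Definition left_symmetric_L1 (f : S -> X) : Prop :=
  inL1 f /\ forall g, inL1 g -> BJ_L1 f g -> BJ_L1 g f.

(* norm-one elements of the dual of L^1(mu, X): linear functionals on the
   representatives, of operator norm exactly 1.  (A bounded functional
   vanishes on null functions, so these are exactly the norm-one elements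
   of L^1(mu,X)^*.) *)
Definition L1_dual_norm_one (F : (S -> X) -> K) : Prop :=
  [/\ (forall f g, inL1 f -> inL1 g -> F (L1add f g) = F f + F g),
      (forall l f, inL1 f -> F (L1scale l f) = l * F f),
      (forall f, inL1 f -> toR `|F f| <= L1norm f) &
      (forall e : R, 0 < e -> exists f, [/\ inL1 f, L1norm f <= 1 &
                                            1 - e < toR `|F f|])].

Definition smooth_L1 (f : S -> X) : Prop :=
  inL1 f /\ L1norm f != 0 /\
  exists F, [/\ L1_dual_norm_one F, F f = ofR (L1norm f) &
    forall G, L1_dual_norm_one G -> G f = ofR (L1norm f) ->
      forall g, inL1 g -> G g = F g].

End BochnerL1.

Definition cor3p5_for (R : realType) (K : numFieldType) (toR : K -> R)
  (ofR : R -> K) : Prop :=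
  forall (X : completeNormedModType K)
         (d : measure_display) (S : measurableType d)
         (mu : {measure set S -> \bar R}),
    measure_is_complete mu -> sigma_finite setT mu ->
    frechet_diff_norm toR ofR X ->
    forall f : S -> X,
      left_symmetric_L1 toR mu f -> L1norm toR mu f != 0 ->
      smooth_L1 toR ofR mu f.

(* Main.v *)
Require Import Defs.
From HB Require Import structures.
From mathcomp Require Import all_boot all_order all_algebra.
From mathcomp Require Import all_classical all_reals all_analysis.
From mathcomp Require Import complex.
From mathcomp Require Import ring lra.

Module Dev.
Set Implicit Arguments.
Unset Strict Implicit.
Unset Printing Implicit Defensive.
Import Order.TTheory GRing.Theory Num.Theory.
Import numFieldNormedType.Exports.
Local Open Scope classical_set_scope.
Local Open Scope ring_scope.

Section Core.
Context (R : realType) (K : numFieldType) (toR : K -> R) (ofR : R -> K).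
Hypothesis toRD : forall a b, toR (a + b) = toR a + toR b.
Hypothesis toR_ofR : forall r, toR (ofR r) = r.
Hypothesis toR_le : forall a b : K, a <= b -> toR a <= toR b.
Hypothesis toR_lt : forall a b : K, a < b -> toR a < toR b.
Hypothesis toRM : forall a b : K, 0 <= a -> toR (a * b) = toR a * toR b.
Hypothesis ofRD : forall r s, ofR (r + s) = ofR r + ofR s.
Hypothesis ofRM : forall r s, ofR (r * s) = ofR r * ofR s.
Hypothesis normr_ofR : forall r, `|ofR r| = ofR `|r|.
Hypothesis ofR_gt0 : forall r, 0 < r -> 0 < ofR r.

Lemma toR0 : toR 0 = 0.
Proof. have h := toRD 0 0; rewrite addr0 in h; apply: (addrI (toR 0)); by rewrite addr0 -h. Qed.

Lemma toRN a : toR (- a) = - toR a.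
Proof. by apply/eqP; rewrite -addr_eq0 -toRD addNr toR0. Qed.

Lemma ofR0 : ofR 0 = 0.
Proof. have h := ofRD 0 0; rewrite addr0 in h; apply: (addrI (ofR 0)); by rewrite addr0 -h. Qed.

Lemma ofRN r : ofR (- r) = - ofR r.
Proof. by apply/eqP; rewrite -addr_eq0 -ofRD addNr ofR0. Qed.

Lemma ofR1 : ofR 1 = 1.
Proof.
have h := ofRM 1 1; rewrite mulr1 in h.
have nz : ofR 1 != 0 by apply/eqP => e; have := toR_ofR 1; rewrite e toR0 => /eqP; rewrite eq_sym oner_eq0.
by apply: (mulfI nz); rewrite mulr1 -h.
Qed.

Context (X : normedModType K).
Local Notation rn := (@rnorm R K toR X).

Lemma rn_ge0 x : 0 <= rn x.
Proof. by rewrite /rnorm -toR0; apply: toR_le. Qed.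

Lemma rnD x y : rn (x + y) <= rn x + rn y.
Proof. by rewrite /rnorm -toRD; apply: toR_le; apply: ler_normD. Qed.

Lemma rnZ l x : rn (l *: x) = toR `|l| * rn x.
Proof. by rewrite /rnorm normrZ toRM. Qed.

Lemma rnN x : rn (- x) = rn x.
Proof. by rewrite /rnorm normrN. Qed.

Lemma rnofR r x : rn (ofR r *: x) = `|r| * rn x.
Proof. by rewrite rnZ normr_ofR toR_ofR. Qed.

Lemma rn0 : rn 0 = 0.
Proof. by rewrite /rnorm normr0 toR0. Qed.

Lemma rn_eq0 x : rn x = 0 -> x = 0.
Proof.
move=> h; apply/eqP; apply/negPn/negP => nz.
have : 0 < `|x| by rewrite normr_gt0.
move=> /toR_lt; rewrite toR0 -/(rnorm toR x) h ltxx //.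
Qed.

Lemma rn_gt0 x : x != 0 -> 0 < rn x.
Proof. by move=> nz; rewrite lt_neqAle rn_ge0 andbT eq_sym; apply/eqP => /rn_eq0/eqP; apply/negP. Qed.

Lemma rnB x y : rn x <= rn y + rn (x - y).
Proof. by have := rnD y (x - y); rewrite addrC subrK. Qed.

Lemma cvg_rn (u : nat -> X) v : u n @[n --> \oo] --> v -> rn (u n) @[n --> \oo] --> rn v.
Proof.
move=> hu; apply/cvgrPdist_lt => e e0.
move/cvgrPdist_lt : hu => /(_ _ (ofR_gt0 e0)).
apply: filterS => n hn.
have h1 : rn (v - u n) < e by have := toR_lt hn; rewrite toR_ofR.
rewrite ltr_norml; apply/andP; split.
- have := rnB (u n) v; rewrite -[rn (u n - v)]rnN opprB; lra.
- have := rnB v (u n); lra.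
Qed.


Context (d : measure_display) (S : measurableType d) (mu : {measure set S -> \bar R}).
Hypothesis mu_cpl : measure_is_complete mu.

Definition simpleT (T : Type) (h : S -> T) :=
  finite_set (range h) /\ forall x, measurable (h @^-1` [set x]).

Lemma simpleT_pre T (h : S -> T) : simpleT h -> forall Y, measurable (h @^-1` Y).
Proof.
move=> [fin mes] Y.
have -> : h @^-1` Y = \bigcup_(x in range h `&` Y) h @^-1` [set x].
  apply/seteqP; split.
  - by move=> s Ys; exists (h s) => //; split => //; exists s.
  - by move=> s [x [_ Yx] hx]; rewrite /preimage /= hx.
apply: fin_bigcup_measurable => //; exact: finite_setIl.
Qed.

Lemma simpleT_comp T U (h : S -> T) (phi : T -> U) : simpleT h -> simpleT (phi \o h).
Proof.
move=> sh; split.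
- apply: (sub_finite_set (B := phi @` range h)); last by apply: finite_image; case: sh.
  by move=> _ [s _ <-]; exists (h s) => //; exists s.
- move=> x; exact: (simpleT_pre sh (phi @^-1` [set x])).
Qed.

Lemma simpleT_meas (h : S -> R) : simpleT h -> measurable_fun setT h.
Proof. by move=> sh _ Y mY; rewrite setTI; exact: simpleT_pre. Qed.

Lemma simpleT_add (g1 g2 : S -> X) : simpleT g1 -> simpleT g2 ->
  simpleT (fun s => g1 s + g2 s).
Proof.
move=> [f1 m1] [f2 m2]; split.
- exact: (finite_image11 (fun a b => a + b) f1 f2).
- move=> x.
  have -> : (fun s => g1 s + g2 s) @^-1` [set x] =
     \bigcup_(a in range g1) (g1 @^-1` [set a] `&` g2 @^-1` [set x - a]).
    apply/seteqP; split => [s /= <-|s [a _ /= [-> ->]]].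
    + by exists (g1 s); [exists s|split => //=; rewrite addrC addKr].
    + by rewrite addrC subrK.
  apply: fin_bigcup_measurable => // a _; apply: measurableI; exact: m1 || exact: m2.
Qed.

Lemma simpleT_ind (A : set S) : measurable A -> simpleT (\1_A : S -> R).
Proof.
move=> mA; split.
- apply: (sub_finite_set (B := [set 0; 1])); last exact: finite_set2.
  move=> _ [s _ <-]; rewrite /indic; case: (s \in A) => /=; [right|left] => //.
- move=> x; have := measurable_realfun.measurable_indic (R:=R) (D:=setT) mA measurableT (measurable_set1 x).
  by rewrite setTI.
Qed.

Local Notation sm := (@strongly_measurable R K X d S mu).

Lemma sm_add f g : sm f -> sm g -> sm (fun s => f s + g s).
Proof.
move=> [u [su hu]] [v [sv hv]]; exists (fun n s => u n s + v n s); split.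
- move=> n; exact: (simpleT_add (su n) (sv n)).
- by move: hu hv; apply: filterS2 => s hu hv; exact: cvgD.
Qed.

Lemma sm_scale l f : sm f -> sm (fun s => l *: f s).
Proof.
move=> [u [su hu]]; exists (fun n s => l *: u n s); split.
- move=> n; exact: (simpleT_comp (fun x => l *: x) (su n)).
- by move: hu; apply: filterS => s hu; exact: cvgZl_tmp.
Qed.

Lemma sm_simple g : simpleT g -> sm g.
Proof.
move=> sg; exists (fun _ => g); split => //.
by apply: aeW => s; exact: cvg_cst.
Qed.

Lemma sm_meas h : sm h -> measurable_fun setT (fun s => rn (h s)).
Proof.
move=> [u [su [N [mN N0 sub]]]].
rewrite -(setUCr N); apply/measurable_funU => //; first exact: measurableC.
split.
- move=> _ Y mY; apply: mu_cpl; exists N; split => //; by move=> s [].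
- apply: (measurable_realfun.measurable_fun_cvg (h := fun n s => rn (u n s))).
  + move=> m; apply: measurable_funTS; apply: simpleT_meas.
    exact: (simpleT_comp rn (su m)).
  + move=> s Ns; apply: cvg_rn.
    by apply: contrapT => nc; apply: Ns; apply: sub.
Qed.


Local Notation N := (@L1norm R K toR X d S mu).
Local Notation L1 := (@inL1 R K toR X d S mu).
Local Notation Int f := (mu.-integrable setT (EFin \o f)).

Lemma NE h : N h = Rintegral mu setT (fun s => rn (h s)).
Proof. by []. Qed.

Lemma N_ge0 h : 0 <= N h.
Proof. by rewrite NE; apply: Rintegral_ge0 => s _; exact: rn_ge0. Qed.

Lemma L1_sm h : L1 h -> sm h.
Proof. by case. Qed.

Lemma L1_int h : L1 h -> Int (fun s => rn (h s)).
Proof.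
move=> [smh fin]; apply/integrableP; split; first exact/measurable_realfun.measurable_EFinP/sm_meas.
rewrite (eq_integral (fun s => (rn (h s))%:E)); first exact: fin.
by move=> s _ /=; rewrite ger0_norm // rn_ge0.
Qed.

Lemma L1_of h : sm h -> Int (fun s => rn (h s)) -> L1 h.
Proof.
move=> smh /integrableP [_ fin]; split => //.
rewrite /L1enorm; move: fin; rewrite (eq_integral (fun s => (rn (h s))%:E)); first by [].
by move=> s _ /=; rewrite ger0_norm // rn_ge0.
Qed.

Lemma L1_le h (psi : S -> R) : sm h -> Int psi -> (forall s, rn (h s) <= psi s) -> L1 h.
Proof.
move=> smh ip hle; apply: L1_of => //.
apply: (le_integrable measurableT _ _ ip).
  exact/measurable_realfun.measurable_EFinP/sm_meas.
move=> s _ /=; rewrite lee_fin ger0_norm ?rn_ge0 //.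
exact: le_trans (hle s) (ler_norm _).
Qed.

Lemma IntZ (u : S -> R) a : Int u -> Int (fun s => a * u s).
Proof.
move=> iu; apply: (@eq_integrable _ _ _ mu setT measurableT (fun s => (a%:E * (EFin \o u) s)%E)).
  by move=> s _ /=; rewrite EFinM.
exact: integrableZl.
Qed.

Lemma IntD (u v : S -> R) : Int u -> Int v -> Int (fun s => u s + v s).
Proof.
move=> iu iv; apply: (@eq_integrable _ _ _ mu setT measurableT ((EFin \o u) \+ (EFin \o v))%E).
  by move=> s _ /=; rewrite EFinD.
exact: integrableD.
Qed.

Lemma Rint_lin (u v : S -> R) a b : Int u -> Int v ->
  Rintegral mu setT (fun s => a * u s + b * v s) =
  a * Rintegral mu setT u + b * Rintegral mu setT v.
Proof.
move=> iu iv; rewrite RintegralD //; try exact: IntZ.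
by rewrite !RintegralZl.
Qed.

Lemma N_le h u v a b : sm h -> L1 u -> L1 v -> 0 <= a -> 0 <= b ->
  (forall s, rn (h s) <= a * rn (u s) + b * rn (v s)) ->
  L1 h /\ N h <= a * N u + b * N v.
Proof.
move=> smh Lu Lv a0 b0 hle.
have ip : Int (fun s => a * rn (u s) + b * rn (v s)).
  by apply: IntD; apply: IntZ; exact: L1_int.
have Lh : L1 h by exact: L1_le ip hle.
split => //; rewrite !NE -Rint_lin; try exact: L1_int.
apply: le_Rintegral => //; try exact: L1_int; try (move=> s _; exact: hle).
Qed.

Lemma N_eq h u v a b : L1 u -> L1 v ->
  (forall s, rn (h s) = a * rn (u s) + b * rn (v s)) ->
  N h = a * N u + b * N v.
Proof.
move=> Lu Lv he; rewrite !NE -Rint_lin; try exact: L1_int.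
by apply: eq_Rintegral => s _; exact: he.
Qed.


Lemma toR1 : toR 1 = 1.
Proof. by rewrite -ofR1 toR_ofR. Qed.

Lemma toR_norm_ge0 (a : K) : 0 <= toR `|a|.
Proof. by rewrite -toR0; apply: toR_le. Qed.

Lemma ind_int (A : set S) : measurable A -> (mu A < +oo)%E ->
  Int (\1_A : S -> R) /\ Rintegral mu setT (\1_A : S -> R) = fine (mu A).
Proof.
move=> mA fA; split.
- apply/integrableP; split.
    exact/measurable_realfun.measurable_EFinP/(measurable_realfun.measurable_indic (R:=R) (D:=setT) mA).
  rewrite (eq_integral (fun s => (\1_A s)%:E)).
    by rewrite integral_indic // setIT.
  by move=> s _ /=; rewrite ger0_norm // indicE; case: (s \in A).
- by rewrite /Rintegral integral_indic // setIT.
Qed.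

Hypothesis mu_sf : sigma_finite setT mu.

Lemma f_ae_nz f : left_symmetric_L1 toR mu f -> N f != 0 ->
  mu.-negligible [set s | f s = 0].
Proof.
move=> [Lf LS] Nf0.
apply: contrapT => nneg.
set Z := [set s | f s = 0].
have mZ : measurable Z.
  have -> : Z = (fun s => rn (f s)) @^-1` [set 0].
    by apply/seteqP; split => s /= h; [rewrite h rn0 | exact: rn_eq0].
  by have := sm_meas (L1_sm Lf) measurableT (measurable_set1 0); rewrite setTI.
have [F FE Fm] := mu_sf.
have [i nA] : exists i, ~ mu.-negligible (Z `&` F i).
  apply: contrapT => nall; apply: nneg.
  have e : Z = \bigcup_i (Z `&` F i) by rewrite -setI_bigcupr -FE setIT.
  suff : mu.-negligible Z by [].
  rewrite e; apply: negligible_bigcup => k; apply: contrapT => h; apply: nall; by exists k.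
set A := Z `&` F i.
have mA : measurable A := measurableI _ _ mZ (Fm i).1.
have fA : (mu A < +oo)%E.
  apply: le_lt_trans (Fm i).2.
  exact: (le_measure _ (mem_set mA) (mem_set (Fm i).1) (@subIsetr _ _ _)).
have [iA IA] := ind_int mA fA.
set m := fine (mu A).
have m0 : 0 < m.
  apply: fine_gt0; rewrite fA andbT lt0e measure_ge0 andbT.
  by apply/eqP => h; apply: nA; exists A; split.
have [s0 fs0] : exists s0, f s0 != 0.
  apply: contrapT => hn; move/eqP: Nf0; apply.
  have fz s : f s = 0.
    by apply: contrapT => ne; apply: hn; exists s; apply/eqP.
  rewrite NE (@eq_Rintegral _ _ _ mu setT (fun _ => 0)); last by move=> s _; rewrite fz rn0.
  by rewrite Rintegral_cst // mul0r.
set x := f s0.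
have rx0 : 0 < rn x by exact: rn_gt0.
set k := N f / (rn x * m).
have k0 : 0 <= k by apply: divr_ge0; [exact: N_ge0 | apply: mulr_ge0; exact: ltW].
set y := ofR k *: x.
have ry : rn y * m = N f.
  rewrite /y rnofR ger0_norm // /k.
  by rewrite -mulrA divfK // mulf_neq0 // lt0r_neq0.
set ind := fun s => ofR (\1_A s) *: y.
have rind s : rn (ind s) = rn y * \1_A s.
  rewrite /ind rnofR ger0_norm; first by rewrite mulrC.
  by rewrite indicE; case: (s \in A).
have sind : sm ind.
  by apply: sm_simple; exact: (simpleT_comp (fun r => ofR r *: y) (simpleT_ind mA)).
have Lind : L1 ind.
  apply: (L1_le sind (IntZ (rn y) iA)) => s; by rewrite rind.
have Nind : N ind = N f.
  rewrite NE (@eq_Rintegral _ _ _ mu setT (fun s => rn y * \1_A s)); last by move=> s _; rewrite rind.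
  by rewrite RintegralZl // IA.
have key a b s : rn (a *: f s + b *: ind s) = toR `|a| * rn (f s) + toR `|b| * rn (ind s).
  rewrite rind /ind indicE; case: (boolP (s \in A)) => sA /=; rewrite ?mulr1n ?mulr0n.
  - have fs : f s = 0 by move: sA; rewrite inE => -[].
    by rewrite fs scaler0 add0r rn0 mulr0 add0r rnZ rnofR normr1 mul1r mulr1.
  - by rewrite ofR0 !scale0r scaler0 addr0 !mulr0 addr0 rnZ.
set hh := fun a b => fun s => a *: f s + b *: ind s.
have Lhh a b : L1 (hh a b).
  have smh : sm (hh a b) by apply: sm_add; apply: sm_scale => //; exact: L1_sm.
  have [] := N_le smh Lf Lind (toR_norm_ge0 a) (toR_norm_ge0 b) => [s|//].
  by rewrite key.
have Nhh a b : N (hh a b) = (toR `|a| + toR `|b|) * N f.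
  by rewrite (N_eq (u := f) (v := ind) (a := toR `|a|) (b := toR `|b|)) // ?Nind ?mulrDl // => s; rewrite key.
have Lg : L1 (hh 1 1) by [].
have BJfg : BJ_L1 toR mu f (hh 1 1).
  move=> l.
  have -> : L1add f (L1scale l (hh 1 1)) = hh (1 + l) l.
    apply/funext => s; rewrite /L1add /L1scale /hh !scale1r scalerDr scalerDl scale1r addrA //.
  rewrite Nhh -[X in X <= _]mul1r; apply: ler_wpM2r; first exact: N_ge0.
  rewrite -toR1 -toRD; apply: toR_le.
  have := ler_normD (1 + l) (- l); rewrite normrN addrK normr1 //.
have := LS _ Lg BJfg (-1).
have -> : L1add (hh 1 1) (L1scale (-1) f) = hh 0 1.
  apply/funext => s; rewrite /L1add /L1scale /hh !scale1r scale0r add0r scaleN1r.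
  by rewrite addrAC subrr add0r.
rewrite !Nhh normr0 toR0 normr1 toR1 add0r mul1r.
have := N_ge0 f; move: Nf0; rewrite neq_lt => /orP [h|h]; lra.
Qed.


Lemma L1_add u v : L1 u -> L1 v -> L1 (L1add u v).
Proof.
move=> Lu Lv; have smh : sm (L1add u v) by apply: sm_add; exact: L1_sm.
have [] := N_le smh Lu Lv ler01 ler01 => [s|//]; rewrite !mul1r; exact: rnD.
Qed.

Lemma L1_scale l u : L1 u -> L1 (L1scale l u).
Proof.
move=> Lu; have smh : sm (L1scale l u) by apply: sm_scale; exact: L1_sm.
have [] := N_le smh Lu Lu (toR_norm_ge0 l) ler01 => [s|//].
by rewrite /L1scale rnZ -[X in X <= _]addr0 lerD2l mulr_ge0 // rn_ge0.
Qed.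

Lemma N_scale l u : L1 u -> N (L1scale l u) = toR `|l| * N u.
Proof.
move=> Lu; rewrite (N_eq (u := u) (v := u) (a := toR `|l|) (b := 0)) // ?mul0r ?addr0 //.
by move=> s; rewrite /L1scale rnZ mul0r addr0.
Qed.


Definition Q t (a y : X) := t^-1 * rn (a + ofR t *: y) + t^-1 * rn (a + ofR t *: (ofR (-1) *: y))
  + (- (2 * t^-1)) * rn a.

Lemma QE t a y : t != 0 -> Q t a y = (rn (a + ofR t *: y) + rn (a - ofR t *: y) - 2 * rn a) / t.
Proof.
move=> t0; rewrite /Q ofRN ofR1 scaleN1r scalerN.
by field.
Qed.

Lemma Q_bounds t a y : 0 < t -> 0 <= Q t a y <= 2 * rn y.
Proof.
move=> t0; rewrite QE ?lt0r_neq0 //.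
have hA : rn (a + ofR t *: y) <= rn a + t * rn y.
  by apply: le_trans (rnD _ _) _; rewrite rnofR ger0_norm // ltW.
have hB : rn (a - ofR t *: y) <= rn a + t * rn y.
  by apply: le_trans (rnD _ _) _; rewrite rnN rnofR ger0_norm // ltW.
have hC : rn a + rn a <= rn (a + ofR t *: y) + rn (a - ofR t *: y).
  have := rnD (a + ofR t *: y) (a - ofR t *: y).
  rewrite addrACA subrr addr0.
  have e2 : (2 : R) = 1 + 1 by ring.
  have -> : a + a = ofR 2 *: a by rewrite e2 ofRD ofR1 scalerDl scale1r.
  by rewrite rnofR ger0_norm // mulrDl mul1r.
apply/andP; split.
- by apply: divr_ge0; [lra | exact: ltW].
- rewrite ler_pdivrMr //.
  have -> : 2 * rn y * t = 2 * (t * rn y) by ring.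
  lra.
Qed.

Lemma Q_cvg a y : frechet_diff_norm toR ofR X -> a != 0 ->
  Q (n.+1%:R^-1) a y @[n --> \oo] --> 0.
Proof.
move=> fr a0.
have [phi [phiD phiZ _ phiE]] := fr a a0.
have phi0 : phi 0 = 0.
  have h := phiD 0 0; rewrite addr0 in h; apply: (addrI (phi 0)); by rewrite addr0 -h.
have phiN h : phi (- h) = - phi h.
  by apply/eqP; rewrite -addr_eq0 -phiD addNr phi0.
apply/cvgrPdist_lt => e e0.
case: (eqVneq y 0) => [->|yn0].
  apply: nearW => n; rewrite /Q !scaler0 !addr0.
  have -> : n.+1%:R^-1 ^-1 * rn a + n.+1%:R^-1 ^-1 * rn a + - (2 * n.+1%:R^-1 ^-1) * rn a = 0 by ring.
  by rewrite subrr normr0.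
have ry0 : 0 < rn y by exact: rn_gt0.
set eps := e / (4 * rn y).
have eps0 : 0 < eps by rewrite /eps divr_gt0 // mulr_gt0.
have [del del0 hdel] := phiE eps eps0.
have hpos : 0 < del / rn y by exact: divr_gt0.
apply: filterS (near_infty_natSinv_lt (PosNum hpos)) => n /= hn.
set t := n.+1%:R^-1 : R.
have t0 : 0 < t by rewrite /t invr_gt0 ltr0Sn.
have [Q0 _] := andP (Q_bounds a y t0).
rewrite sub0r normrN ger0_norm //.
rewrite QE ?lt0r_neq0 //.
set h := ofR t *: y.
have rh : rn h = t * rn y by rewrite /h rnofR ger0_norm // ltW.
have hh : 0 < rn h < del.
  rewrite rh mulr_gt0 //=; by rewrite -ltr_pdivlMr.
have E1 := hdel h hh.
have E2 := hdel (- h); rewrite rnN in E2; have {}E2 := E2 hh.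
move: E1 E2; rewrite phiN !ler_norml => /andP[_ E1] /andP[_ E2].
rewrite ltr_pdivrMr //.
have ee : eps * rn h = e * t / 4 by rewrite rh /eps; field; exact: lt0r_neq0.
rewrite ee in E1 E2.
have et : 0 < e * t by exact: mulr_gt0.
lra.
Qed.

Section Deriv.
Variable f : S -> X.
Hypothesis Lf : L1 f.

Definition fp t v := L1add f (L1scale (ofR t) v).
Definition Dq v t := (N (fp t v) - N f) / t.
Definition pE v := [set Dq v t | t in [set t : R | 0 < t]].
Definition p v := inf (pE v).

Lemma fp_L1 t v : L1 v -> L1 (fp t v).
Proof. by move=> Lv; apply: L1_add => //; exact: L1_scale. Qed.

Lemma N_fp_le t v : L1 v -> 0 <= t -> N (fp t v) <= N f + t * N v.
Proof.
move=> Lv t0.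
suff hs : forall s, rn (fp t v s) <= 1 * rn (f s) + t * rn (v s).
  by have [_] := N_le (L1_sm (fp_L1 t Lv)) Lf Lv ler01 t0 hs; rewrite mul1r.
move=> s; rewrite mul1r /fp /L1add /L1scale; apply: le_trans (rnD _ _) _.
by rewrite rnofR ger0_norm //.
Qed.

Lemma N_fp_ge t v : L1 v -> 0 <= t -> N f <= N (fp t v) + t * N v.
Proof.
move=> Lv t0.
suff hs : forall s, rn (f s) <= 1 * rn (fp t v s) + t * rn (v s).
  by have [_] := N_le (L1_sm Lf) (fp_L1 t Lv) Lv ler01 t0 hs; rewrite mul1r.
move=> s; rewrite mul1r /fp /L1add /L1scale.
have := rnD (f s + ofR t *: v s) (- (ofR t *: v s)).
by rewrite addrK rnN rnofR ger0_norm //.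
Qed.

Lemma Dq_lb v t : L1 v -> 0 < t -> - N v <= Dq v t.
Proof.
move=> Lv t0; rewrite /Dq ler_pdivlMr //.
have := N_fp_ge Lv (ltW t0); rewrite (mulrC t); lra.
Qed.

Lemma Dq_ub v t : L1 v -> 0 < t -> Dq v t <= N v.
Proof.
move=> Lv t0; rewrite /Dq ler_pdivrMr //.
have := N_fp_le Lv (ltW t0); rewrite (mulrC t); lra.
Qed.

Lemma Dq_mono v s t : L1 v -> 0 < s -> s <= t -> Dq v s <= Dq v t.
Proof.
move=> Lv s0 st.
have t0 : 0 < t by exact: lt_le_trans st.
set w := s / t.
have w0 : 0 <= w by rewrite /w divr_ge0 // ltW.
have w1 : 0 <= 1 - w by rewrite subr_ge0 /w ler_pdivrMr // mul1r.
have hx : forall x, rn (fp s v x) <= w * rn (fp t v x) + (1 - w) * rn (f x).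
  move=> x.
  have -> : fp s v x = ofR w *: fp t v x + ofR (1 - w) *: f x.
    have wt : w * t = s by rewrite /w divfK // lt0r_neq0.
    rewrite /fp /L1add /L1scale scalerDr scalerA -ofRM wt.
    by rewrite addrAC -scalerDl -ofRD (addrC w) subrK ofR1 scale1r.
  by apply: le_trans (rnD _ _) _; rewrite !rnofR !ger0_norm.
have [_ hN] := N_le (L1_sm (fp_L1 s Lv)) (fp_L1 t Lv) Lf w0 w1 hx.
rewrite /Dq ler_pdivrMr //.
have -> : (N (fp t v) - N f) / t * s = w * N (fp t v) + (1 - w) * N f - N f.
  by rewrite /w; field; exact: lt0r_neq0.
lra.
Qed.

Lemma pE_lb v : L1 v -> has_lbound (pE v).
Proof. by move=> Lv; exists (- N v) => _ [t t0 <-]; exact: Dq_lb. Qed.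

Lemma p_le v t : L1 v -> 0 < t -> p v <= Dq v t.
Proof. by move=> Lv t0; apply: (ge_inf (pE_lb Lv)); exists t. Qed.

Lemma p_ge v c : (forall t, 0 < t -> c <= Dq v t) -> c <= p v.
Proof.
move=> h; apply: lb_le_inf; first by exists (Dq v 1); exists 1 => //=; exact: ltr01.
by move=> _ [t t0 <-]; exact: h.
Qed.

Lemma p_lb v : L1 v -> - N v <= p v.
Proof. by move=> Lv; apply: p_ge => t t0; exact: Dq_lb. Qed.

Lemma p_ub v : L1 v -> p v <= N v.
Proof. by move=> Lv; apply: le_trans (p_le Lv ltr01) (Dq_ub Lv ltr01). Qed.


Lemma p_pos r v : 0 < r -> L1 v -> p (L1scale (ofR r) v) = r * p v.
Proof.
move=> r0 Lv.
have Lrv : L1 (L1scale (ofR r) v) by exact: L1_scale.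
have eqD t : 0 < t -> Dq (L1scale (ofR r) v) t = r * Dq v (t * r).
  move=> t0; rewrite /Dq; have -> : fp t (L1scale (ofR r) v) = fp (t * r) v.
    by apply/funext => x; rewrite /fp /L1add /L1scale scalerA -ofRM.
  field; apply/andP; split; exact: lt0r_neq0.
apply/le_anti/andP; split.
- have h : p (L1scale (ofR r) v) / r <= p v.
    apply: p_ge => t t0; rewrite ler_pdivrMr //.
    have t'0 : 0 < t / r by exact: divr_gt0.
    by apply: le_trans (p_le Lrv t'0) _; rewrite eqD // divfK ?lt0r_neq0 // [X in _ <= X]mulrC.
  by move: h; rewrite ler_pdivrMr // mulrC.
- apply: p_ge => t t0; rewrite eqD // ler_pM2l //; apply: p_le => //.
  exact: mulr_gt0.
Qed.

Lemma p_f : p f = N f.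
Proof.
have eqD t : 0 < t -> Dq f t = N f.
  move=> t0; rewrite /Dq.
  have -> : N (fp t f) = (1 + t) * N f.
    rewrite (N_eq (u := f) (v := f) (a := 1 + t) (b := 0)) ?mul0r ?addr0 //.
    move=> x; rewrite mul0r addr0 /fp /L1add /L1scale.
    have -> : f x + ofR t *: f x = ofR (1 + t) *: f x by rewrite ofRD ofR1 scalerDl scale1r.
    by rewrite rnofR ger0_norm // addr_ge0 // ltW.
  by field; exact: lt0r_neq0.
apply/le_anti/andP; split.
- by rewrite -(eqD 1 ltr01); exact: p_le.
- by apply: p_ge => t t0; rewrite eqD.
Qed.

Lemma p_sub u v : L1 u -> L1 v -> p (L1add u v) <= p u + p v.
Proof.
move=> Lu Lv.
have Luv : L1 (L1add u v) by exact: L1_add.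
have key t : 0 < t -> Dq (L1add u v) t <= Dq u (2 * t) + Dq v (2 * t).
  move=> t0.
  have h2 : 0 <= 2^-1 :> R by rewrite invr_ge0.
  have hx : forall x, rn (fp t (L1add u v) x) <=
      2^-1 * rn (fp (2 * t) u x) + 2^-1 * rn (fp (2 * t) v x).
    move=> x.
    have -> : fp t (L1add u v) x = ofR 2^-1 *: fp (2 * t) u x + ofR 2^-1 *: fp (2 * t) v x.
      rewrite /fp /L1add /L1scale !scalerDr !scalerA -!ofRM.
      have -> : 2^-1 * (2 * t) = t by field.
      rewrite addrACA -scalerDl -ofRD.
      have -> : 2^-1 + 2^-1 = 1 :> R by field.
      by rewrite ofR1 scale1r.
    by apply: le_trans (rnD _ _) _; rewrite !rnofR !ger0_norm.
  have [_ hN] := N_le (L1_sm (fp_L1 t Luv)) (fp_L1 (2 * t) Lu) (fp_L1 (2 * t) Lv) h2 h2 hx.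
  rewrite /Dq ler_pdivrMr //.
  have -> : ((N (fp (2 * t) u) - N f) / (2 * t) + (N (fp (2 * t) v) - N f) / (2 * t)) * t
     = 2^-1 * N (fp (2 * t) u) + 2^-1 * N (fp (2 * t) v) - N f.
    by field; exact: lt0r_neq0.
  lra.
have h1 t1 t2 : 0 < t1 -> 0 < t2 -> p (L1add u v) <= Dq u t1 + Dq v t2.
  move=> t10 t20; set t := Num.min t1 t2 / 2.
  have tm : 2 * t = Num.min t1 t2 by rewrite /t; field.
  have t0 : 0 < t by rewrite /t divr_gt0 // lt_min t10 t20.
  apply: le_trans (p_le Luv t0) _; apply: le_trans (key t t0) _.
  rewrite tm; apply: lerD; apply: Dq_mono => //; rewrite ?lt_min ?t10 ?t20 //.
  - by rewrite ge_min lexx.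
  - by rewrite ge_min lexx orbT.
have : p (L1add u v) - p v <= p u.
  apply: p_ge => t1 t10.
  suff : p (L1add u v) - Dq u t1 <= p v by lra.
  apply: p_ge => t2 t20; have := h1 t1 t2 t10 t20; lra.
lra.
Qed.

Lemma p0 : p (fun _ => 0) = 0.
Proof.
have eqD t : 0 < t -> Dq (fun _ => 0) t = 0.
  move=> t0; rewrite /Dq.
  have -> : fp t (fun _ => 0) = f by apply/funext => x; rewrite /fp /L1add /L1scale scaler0 addr0.
  by rewrite subrr mul0r.
apply/le_anti/andP; split.
- rewrite -(eqD 1 ltr01); apply: p_le => //.
  have -> : (fun _ => 0 : X) = L1scale 0 f by apply/funext => x; rewrite /L1scale scale0r.
  exact: L1_scale.
- by apply: p_ge => t t0; rewrite eqD.
Qed.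


Hypothesis fr : frechet_diff_norm toR ofR X.
Hypothesis fnz : mu.-negligible [set s | f s = 0].

Lemma p_sym v : L1 v -> p v + p (L1scale (ofR (-1)) v) <= 0.
Proof.
move=> Lv; set v' := L1scale (ofR (-1)) v.
have Lv' : L1 v' by exact: L1_scale.
set tn := fun n : nat => (n.+1%:R)^-1 : R.
have tn0 n : 0 < tn n by rewrite /tn invr_gt0 ltr0Sn.
set q := fun n s => Q (tn n) (f s) (v s).
have qE n : q n = fun s => (tn n)^-1 * rn (fp (tn n) v s) + (tn n)^-1 * rn (fp (tn n) v' s)
    + (- (2 * (tn n)^-1)) * rn (f s) by [].
have qI n : Int (q n).
  rewrite qE; apply: IntD; first apply: IntD; apply: IntZ; apply: L1_int => //; exact: fp_L1.
have qR n : Rintegral mu setT (q n) = Dq v (tn n) + Dq v' (tn n).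
  rewrite qE RintegralD //; first last.
  - by apply: IntZ; exact: L1_int.
  - by apply: IntD; apply: IntZ; apply: L1_int; exact: fp_L1.
  rewrite RintegralD //; first last.
  - by apply: IntZ; apply: L1_int; exact: fp_L1.
  - by apply: IntZ; apply: L1_int; exact: fp_L1.
  rewrite !RintegralZl //; try (apply: L1_int => //; exact: fp_L1).
  rewrite /Dq !NE; field; exact: lt0r_neq0.
have main : forall e, 0 < e -> exists n, Rintegral mu setT (q n) < e.
  have mq := fun n => (elimT (integrableP _ _ _) (qI n)).1.
  have ig : mu.-integrable setT (EFin \o (fun s => 2 * rn (v s))) by apply: IntZ; exact: L1_int.
  have fg : {ae mu, forall x n, setT x -> (`|(EFin \o q n) x| <= (EFin \o (fun s => (2 * rn (v s))%R)) x)%E}.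
    apply: aeW => x n _ /=; rewrite lee_fin.
    have [h1 h2] := andP (Q_bounds (f x) (v x) (tn0 n)).
    by rewrite ger0_norm.
  have ff : {ae mu, forall x, setT x -> (EFin \o q n) x @[n --> \oo] --> cst 0%E x}.
    apply: (negligibleS _ fnz) => x /= nP; apply: contrapT => nz; apply: nP => _.
    apply/fine_cvgP; split; first exact: nearW.
    by apply: Q_cvg => //; apply/eqP.
  have [_ _ h3] := dominated_convergence measurableT mq (measurable_cst _) ff ig fg.
  rewrite integral0 in h3; move/fine_cvgP: h3 => [_ h4].
  move=> e e0; move/cvgrPdist_lt: h4 => /(_ e e0) /filter_ex [n hn]; exists n.
  apply: le_lt_trans hn; rewrite sub0r normrN; exact: ler_norm.
apply/ler_addgt0Pr => e e0; rewrite add0r.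
have [n hn] := main e e0.
apply: le_trans (ltW hn); rewrite qR; apply: lerD; exact: p_le.
Qed.


Lemma L1_zero : L1 (fun _ => 0 : X).
Proof.
have -> : (fun _ => 0 : X) = L1scale 0 f by apply/funext => x; rewrite /L1scale scale0r.
exact: L1_scale.
Qed.

Lemma p_neg v : L1 v -> p (L1scale (ofR (-1)) v) = - p v.
Proof.
move=> Lv; have Lv' : L1 (L1scale (ofR (-1)) v) by exact: L1_scale.
have e : L1add v (L1scale (ofR (-1)) v) = (fun _ => 0).
  by apply/funext => x; rewrite /L1add /L1scale ofRN ofR1 scaleN1r subrr.
have := p_sub Lv Lv'; rewrite e p0 => h1.
have := p_sym Lv; lra.
Qed.

Lemma p_add u w : L1 u -> L1 w -> p (L1add u w) = p u + p w.
Proof.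
move=> Lu Lw; apply/le_anti/andP; split; first exact: p_sub.
have Lu' : L1 (L1scale (ofR (-1)) u) by exact: L1_scale.
have Lw' : L1 (L1scale (ofR (-1)) w) by exact: L1_scale.
have e : L1scale (ofR (-1)) (L1add u w) = L1add (L1scale (ofR (-1)) u) (L1scale (ofR (-1)) w).
  by apply/funext => x; rewrite /L1add /L1scale scalerDr.
have := p_sub Lu' Lw'; rewrite -e !p_neg //; last exact: L1_add.
lra.
Qed.

Lemma p_scale r v : L1 v -> p (L1scale (ofR r) v) = r * p v.
Proof.
move=> Lv; case: (ltgtP r 0) => [r0|r0|->].
- have e : L1scale (ofR r) v = L1scale (ofR (- r)) (L1scale (ofR (-1)) v).
    by apply/funext => x; rewrite /L1scale scalerA -ofRM mulrN1 opprK.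
  rewrite e p_pos ?oppr_gt0 //; last exact: L1_scale.
  by rewrite p_neg // mulrNN.
- exact: p_pos.
- have -> : L1scale (ofR 0) v = (fun _ => 0) by apply/funext => x; rewrite /L1scale ofR0 scale0r.
  by rewrite p0 mul0r.
Qed.

Hypothesis toR_normle : forall z : K, toR z <= toR `|z|.
Hypothesis det : forall z w : K, (forall c, toR (c * z) = toR (c * w)) -> z = w.
Hypothesis rot : forall z : K, exists u : K, `|u| = 1 /\ u * z = `|z|.
Variable iK : K.
Hypothesis iK2 : iK * iK = -1 \/ iK = 0.
Hypothesis toR_iK : forall r, toR (iK * ofR r) = 0.
Hypothesis decomp : forall c, c = ofR (toR c) + iK * ofR (toR (- (iK * c))).
Hypothesis imz : forall a b : R, 0 <= a -> toR `|ofR a + iK * ofR b| <= a -> iK * ofR b = 0.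

Lemma ofR_ge0 t : 0 <= t -> 0 <= ofR t.
Proof.
rewrite le_eqVlt => /orP [/eqP <-|t0]; first by rewrite ofR0.
exact/ltW/ofR_gt0.
Qed.

Lemma toR_ofRM t z : 0 <= t -> toR (ofR t * z) = t * toR z.
Proof. by move=> t0; rewrite toRM ?toR_ofR // ofR_ge0. Qed.

Lemma sandwich G :
  (forall u w, L1 u -> L1 w -> G (L1add u w) = G u + G w) ->
  (forall l u, L1 u -> G (L1scale l u) = l * G u) ->
  (forall u, L1 u -> toR `|G u| <= N u) ->
  G f = ofR (N f) -> forall v, L1 v -> toR (G v) = p v.
Proof.
move=> GD GZ Gb Gf.
have ub w : L1 w -> toR (G w) <= p w.
  move=> Lw; apply: p_ge => t t0; rewrite /Dq ler_pdivlMr //.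
  have h1 : toR (G (fp t w)) = N f + t * toR (G w).
    by rewrite /fp GD //; [rewrite GZ // Gf toRD toR_ofR toR_ofRM // ltW | exact: L1_scale].
  have h2 : toR (G (fp t w)) <= N (fp t w).
    by apply: le_trans (toR_normle _) (Gb _ (fp_L1 t Lw)).
  rewrite (mulrC _ t); lra.
move=> v Lv; apply/le_anti/andP; split; first exact: ub.
have Lv' : L1 (L1scale (ofR (-1)) v) by exact: L1_scale.
have := ub _ Lv'; rewrite p_neg // GZ // ofRN ofR1 mulN1r toRN; lra.
Qed.

Definition F v := ofR (p v) + iK * ofR (- p (L1scale iK v)).

Lemma toR_F v : toR (F v) = p v.
Proof. by rewrite /F toRD toR_ofR toR_iK addr0. Qed.

Lemma F_add u w : L1 u -> L1 w -> F (L1add u w) = F u + F w.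
Proof.
move=> Lu Lw.
have e : L1scale iK (L1add u w) = L1add (L1scale iK u) (L1scale iK w).
  by apply/funext => x; rewrite /L1add /L1scale scalerDr.
rewrite /F e !p_add //; try exact: L1_scale.
rewrite opprD !ofRD; ring.
Qed.

Lemma F_scaleR r v : L1 v -> F (L1scale (ofR r) v) = ofR r * F v.
Proof.
move=> Lv.
have e : L1scale iK (L1scale (ofR r) v) = L1scale (ofR r) (L1scale iK v).
  by apply/funext => x; rewrite /L1scale !scalerA mulrC.
rewrite /F e !p_scale //; last exact: L1_scale.
rewrite -mulrN !ofRM; ring.
Qed.

Lemma F_iK v : L1 v -> F (L1scale iK v) = iK * F v.
Proof.
move=> Lv; case: iK2 => h.
- have e : L1scale iK (L1scale iK v) = L1scale (ofR (-1)) v.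
    by apply/funext => x; rewrite /L1scale scalerA h ofRN ofR1.
  rewrite /F e p_neg // opprK mulrDr mulrA h ofRN; ring.
- have e : forall u : S -> X, L1scale iK u = (fun _ => 0).
    by move=> u; apply/funext => x; rewrite /L1scale h scale0r.
  by rewrite /F !e p0 h !mul0r ?oppr0 ?ofR0 ?addr0.
Qed.

Lemma F_scale c v : L1 v -> F (L1scale c v) = c * F v.
Proof.
move=> Lv.
set a := toR c; set b := toR (- (iK * c)).
have e : L1scale c v = L1add (L1scale (ofR a) v) (L1scale (ofR b) (L1scale iK v)).
  apply/funext => x; rewrite /L1add /L1scale scalerA [ofR b * iK]mulrC -scalerDl.
  by rewrite /a /b -decomp.
have Liv : L1 (L1scale iK v) by exact: L1_scale.
rewrite e F_add; try exact: L1_scale.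
rewrite !F_scaleR // F_iK // mulrA [ofR b * iK]mulrC -mulrDl.
by rewrite /a /b -decomp.
Qed.

Lemma F_bound v : L1 v -> toR `|F v| <= N v.
Proof.
move=> Lv; have [u [u1 uz]] := rot (F v).
rewrite -uz -F_scale // toR_F.
apply: le_trans (p_ub _) _; first exact: L1_scale.
by rewrite N_scale // u1 toR1 mul1r.
Qed.

Lemma F_f : F f = ofR (N f).
Proof.
have hb := F_bound Lf.
move: hb; rewrite /F p_f => hb.
by rewrite (imz (N_ge0 f) hb) addr0.
Qed.

Lemma smooth_f : N f != 0 -> smooth_L1 toR ofR mu f.
Proof.
move=> Nf0; split => //; split => //; exists F; split.
- split.
  + exact: F_add.
  + by move=> l u Lu; exact: F_scale.
  + exact: F_bound.
  + move=> e e0; exists (L1scale (ofR (N f)^-1) f).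
    have Nf : 0 < N f by rewrite lt_neqAle eq_sym Nf0 N_ge0.
    split.
    * exact: L1_scale.
    * by rewrite N_scale // normr_ofR toR_ofR ger0_norm ?invr_ge0 ?N_ge0 // mulVf.
    * rewrite F_scale // F_f -ofRM mulVf // normr_ofR normr1 toR_ofR; lra.
- exact: F_f.
- move=> G [GD GZ Gb _] Gf g Lg; apply: det => c.
  rewrite -GZ // -F_scale // toR_F (sandwich GD GZ Gb Gf) //; exact: L1_scale.
Qed.

End Deriv.

End Core.

Lemma rotC (C : numClosedFieldType) (z : C) : exists u, `|u| = 1 /\ u * z = `|z|.
Proof.
case: (eqVneq z 0) => [->|nz]; first by exists 1; rewrite normr1 mulr0 normr0.
have nz' : `|z| != 0 by rewrite normr_eq0.
exists (z^* / `|z|); split.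
- by rewrite normrM normfV norm_conjC normr_id divff.
- by rewrite mulrAC -normCKC expr2 mulfK.
Qed.

Section CplxInst.
Variable R : realType.
Local Open Scope complex_scope.

Lemma c_toRD (a b : R[i]) : complex.Re (a + b) = complex.Re a + complex.Re b.
Proof. by case: a => ? ?; case: b => ? ? /=. Qed.
Lemma c_toR_le (a b : R[i]) : a <= b -> complex.Re a <= complex.Re b.
Proof. by rewrite lecE => /andP[]. Qed.
Lemma c_toR_lt (a b : R[i]) : a < b -> complex.Re a < complex.Re b.
Proof. by rewrite ltcE => /andP[]. Qed.
Lemma c_toRM (a b : R[i]) : 0 <= a -> complex.Re (a * b) = complex.Re a * complex.Re b.
Proof. case: a => a1 a2; case: b => b1 b2; rewrite lecE /= => /andP[/eqP h _]. rewrite h mul0r subr0 //. Qed.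
Lemma c_ofRD (r s : R) : (r + s)%:C = r%:C + s%:C :> R[i].
Proof. by rewrite rmorphD. Qed.
Lemma c_ofRM (r s : R) : (r * s)%:C = r%:C * s%:C :> R[i].
Proof. by rewrite rmorphM. Qed.
Lemma c_normr_ofR (r : R) : `|r%:C| = (`|r|)%:C :> R[i].
Proof. by rewrite normc_def /= [0 ^+ 2]mul0r addr0 sqrtr_sqr. Qed.
Lemma c_ofR_gt0 (r : R) : 0 < r -> 0 < r%:C :> R[i].
Proof. by move=> r0; rewrite ltcE /= eqxx r0. Qed.
Lemma c_toR_normle (z : R[i]) : complex.Re z <= complex.Re `|z|.
Proof.
rewrite normc_def /=; case: z => a b /=; apply: le_trans (ler_norm a) _.
by rewrite -sqrtr_sqr ler_wsqrtr // lerDl sqr_ge0.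
Qed.
Lemma c_det (z w : R[i]) : (forall c, complex.Re (c * z) = complex.Re (c * w)) -> z = w.
Proof.
case: z => a b; case: w => c d h.
have h1 := h 1; have h2 := h (- 'i).
move: h1 h2 => /=; rewrite !mul1r !mul0r !subr0 => ->.
rewrite !oppr0 !mul0r !sub0r !mulN1r !opprK => ->. by [].
Qed.
Lemma c_iK2 : 'i * 'i = -1 :> R[i].
Proof. by rewrite -expr2 sqr_i. Qed.
Lemma c_toR_iK (r : R) : complex.Re ('i * r%:C) = 0.
Proof. by rewrite /= mul0r mul1r subrr. Qed.
Lemma c_decomp (c : R[i]) : c = (complex.Re c)%:C + 'i * (complex.Re (- ('i * c)))%:C.
Proof. case: c => a b; apply/eqP; rewrite eq_complex /=; apply/andP; split; apply/eqP; ring. Qed.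
Lemma c_imz (a b : R) : 0 <= a -> complex.Re `|a%:C + 'i * b%:C| <= a -> 'i * b%:C = 0.
Proof.
move=> a0; rewrite normc_def /=.
have -> : a + (0 * b - 1 * 0) = a by ring.
have -> : 0 + (0 * 0 + 1 * b) = b by ring.
move=> h.
have : a ^+ 2 + b ^+ 2 <= a ^+ 2.
  rewrite -ler_sqrt ?addr_ge0 ?sqr_ge0 // sqrtr_sqr ger0_norm //.
have : 0 <= b ^+ 2 by exact: sqr_ge0.
move=> h1 h2; have : b ^+ 2 = 0 by lra.
move/eqP; rewrite sqrf_eq0 => /eqP ->; by rewrite mulr0.
Qed.
End CplxInst.

Local Open Scope classical_set_scope.

Theorem cor_generic (R : realType) (K : numFieldType) (toR : K -> R) (ofR : R -> K)
  (toRD : forall a b, toR (a + b) = toR a + toR b)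
  (toR_ofR : forall r, toR (ofR r) = r)
  (toR_le : forall a b : K, a <= b -> toR a <= toR b)
  (toR_lt : forall a b : K, a < b -> toR a < toR b)
  (toRM : forall a b : K, 0 <= a -> toR (a * b) = toR a * toR b)
  (ofRD : forall r s, ofR (r + s) = ofR r + ofR s)
  (ofRM : forall r s, ofR (r * s) = ofR r * ofR s)
  (normr_ofR : forall r, `|ofR r| = ofR `|r|)
  (ofR_gt0 : forall r, 0 < r -> 0 < ofR r)
  (toR_normle : forall z : K, toR z <= toR `|z|)
  (det : forall z w : K, (forall c, toR (c * z) = toR (c * w)) -> z = w)
  (rot : forall z : K, exists u : K, `|u| = 1 /\ u * z = `|z|)
  (iK : K)
  (iK2 : iK * iK = -1 \/ iK = 0)
  (toR_iK : forall r, toR (iK * ofR r) = 0)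
  (decomp : forall c, c = ofR (toR c) + iK * ofR (toR (- (iK * c))))
  (imz : forall a b : R, 0 <= a -> toR `|ofR a + iK * ofR b| <= a -> iK * ofR b = 0) :
  cor3p5_for toR ofR.
Proof.
move=> X d S mu cpl sf fr f LS Nf0.
have fnz := f_ae_nz toRD toR_ofR toR_le toR_lt toRM ofRD ofRM normr_ofR ofR_gt0 cpl sf LS Nf0.
exact: (smooth_f toRD toR_ofR toR_le toR_lt toRM ofRD ofRM normr_ofR ofR_gt0 cpl LS.1 fr fnz
  toR_normle det rot iK2 toR_iK decomp imz Nf0).
Qed.

Lemma r_det (R : realType) (z w : R) : (forall c, (c * z) = (c * w)) -> z = w.
Proof. by move=> h; have := h 1; rewrite !mul1r. Qed.

Lemma r_rot (R : realType) (z : R) : exists u : R, `|u| = 1 /\ u * z = `|z|.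
Proof.
case: (lerP 0 z) => hz; [exists 1 | exists (-1)]; rewrite ?normrN normr1 ?mul1r ?mulN1r; split => //.
- by rewrite ger0_norm.
- by rewrite ltr0_norm.
Qed.

Lemma real_case (R : realType) : cor3p5_for (fun x : R => x) (fun x : R => x).
Proof.
apply: (@cor_generic R R (fun x : R => x) (fun x : R => x)
  (fun a b => erefl) (fun r => erefl) (fun a b h => h) (fun a b h => h)
  (fun a b _ => erefl) (fun r s => erefl) (fun r s => erefl) (fun r => erefl)
  (fun r h => h) (@ler_norm R) (@r_det R) (@r_rot R) 0 (or_intror erefl)).
- by move=> r; rewrite mul0r.
- by move=> c; rewrite mul0r addr0.
- by move=> a b _ _; rewrite mul0r.
Qed.

Lemma cplx_case (R : realType) :
  cor3p5_for (@complex.Re R) (fun x : R => (x%:C)%C : R[i]).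
Proof.
exact: (@cor_generic R R[i] (@complex.Re R) (fun x : R => (x%:C)%C : R[i])
  (@c_toRD R) (fun r => erefl) (@c_toR_le R) (@c_toR_lt R) (@c_toRM R) (@c_ofRD R)
  (@c_ofRM R) (@c_normr_ofR R) (@c_ofR_gt0 R) (@c_toR_normle R) (@c_det R)
  (@rotC _) 'i%C (or_introl (@c_iK2 R)) (@c_toR_iK R) (@c_decomp R) (@c_imz R)).
Qed.

End Dev.

Theorem corollary3p5 :
  (forall R : realType, cor3p5_for (fun x : R => x) (fun x : R => x)) /\
  (forall R : realType,
     cor3p5_for (@Re R) (fun x : R => (x%:C)%C : R[i])).
Proof. split; [exact: Dev.real_case | exact: Dev.cplx_case]. Qed.
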